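(* Let $n\ge1$ and let $(A_1,\dots,A_n)$ be a sequence of words from $\mathsf{W}_\omega$. Then there exists a unique $n$-bounded index collection $(s_1,\dots,s_m)$ that is maximal for $(A_1,\dots,A_n)$, and $m,s_1,\dots,s_m$ are determined by the following equations on $m,s_0,s_1,\dots$: $s_0=0$; if $s_k\neq n$ then $s_{k+1}=\min\{f\mid s_k<f\le n,\ \forall l\,(s_k<l\le n\to A_l\precsim A_f)\}$; if $s_k=n$ then $s_{k+1}=n$; and $m=\min\{f\ge1\mid s_f=n\}$.
   Context: Words are finite strings over $\mathbb{N}$; $\mathsf{W}_\omega$ is the set of all words, $\Lambda$ the empty word. For $k\in\mathbb{N}$, $\mathsf{S}_k$ is the set of words all of whose symbols are $\ge k$. Given a linear preorder $\precsim$ with $A\sim B$ iff $A\precsim B\wedge B\precsim A$ and $A\prec B$ iff $A\precsim B\wedge\neg B\precsim A$, a finite sequence $(A_1,\dots,A_p)$ is lexicographically not greater than $(B_1,\dots,B_q)$ iff either $p\le q$ and $A_i\sim B_i$ for all $i\le p$, or there is $s<\min(p,q)$ with $A_i\sim B_i$ for $i\le s$ and $A_{s+1}\prec B_{s+1}$. A lexicographically maximal subsequence of a finite sequence is a subsequence that is lexicographically not less than every subsequence. The linear preorder $\precsim$ on $\mathsf{W}_\omega$ is defined by recursion on (largest symbol of $AB$) $-$ (smallest symbol of $AB$): $\Lambda\precsim\Lambda$; if $AB$ is nonempty with minimal symbol $n$, write uniquely $A=A_1n\cdots nA_k$, $B=B_1n\cdots nB_l$ ($k,l\ge1$) with $A_i,B_j\in\mathsf{S}_{n+1}$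 (possibly empty); let $C,D$ be lexicographically maximal subsequences of $(A_1,\dots,A_k)$, $(B_1,\dots,B_l)$; then $A\precsim B$ iff $C$ is lexicographically not greater than $D$. An index collection is a strictly increasing finite sequence of positive integers; it is $n$-bounded if all its entries are $\le n$. An $n$-bounded index collection $(s_1,\dots,s_m)$ is maximal for $(A_1,\dots,A_n)$ if $(A_{s_1},\dots,A_{s_m})$ is a lexicographically maximal subsequence of $(A_1,\dots,A_n)$. *)

(* Defs.v *)
From mathcomp Require Import all_boot.
Set Implicit Arguments. Unset Strict Implicit. Unset Printing Implicit Defensive.

Definition word := seq nat.

Definition minw (w : word) : nat := foldr minn (head 0 w) w.
Definition maxw (w : word) : nat := foldr maxn 0 w.

(* Split a word at every occurrence of symbol n:
   A = A_1 n A_2 n ... n A_k  gives [:: A_1; ...; A_k]  (k >= 1). *)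
Fixpoint split_on (n : nat) (A : word) : seq word :=
  match A with
  | [::] => [:: [::]]
  | x :: s =>
      let r := split_on n s in
      if x == n then [::] :: r
      else match r with
           | t :: r' => (x :: t) :: r'
           | [::] => [:: [:: x]]
           end
  end.

(* Lexicographic "not greater than" on finite sequences, w.r.t. a preorder le
   (with  a ~ b := le a b /\ le b a  and  a < b := le a b /\ ~ le b a). *)
Fixpoint lexle {T : Type} (le : T -> T -> Prop) (C D : seq T) : Prop :=
  match C, D with
  | [::], _ => True
  | _ :: _, [::] => False
  | a :: C', b :: D' =>
      (le a b /\ ~ le b a) \/ (le a b /\ le b a /\ lexle le C' D')
  end.

Definition is_lexmax {T : eqType} (le : T -> T -> Prop) (S C : seq T) : Prop :=
  subseq C S /\ forall D, subseq D S -> lexle le D C.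

Fixpoint wle_f (k : nat) (A B : word) : Prop :=
  match k with
  | 0 => True
  | k'.+1 =>
      match A ++ B with
      | [::] => True
      | _ :: _ =>
          let n := minw (A ++ B) in
          exists C D,
            is_lexmax (wle_f k') (split_on n A) C /\
            is_lexmax (wle_f k') (split_on n B) D /\
            lexle (wle_f k') C D
      end
  end.

(* The linear preorder on W_omega (fuel = (max - min of AB) + 1 suffices). *)
Definition wle (A B : word) : Prop :=
  wle_f (maxw (A ++ B) - minw (A ++ B)).+1 A B.

(* 1-based access A_i of a sequence (A_1, ..., A_n). *)
Definition At (As : seq word) (i : nat) : word := nth [::] As i.-1.

Definition index_coll (n : nat) (s : seq nat) : Prop :=
  sorted ltn s /\ all (fun i => 0 < i) s /\ all (fun i => i <= n) s.

Definition max_ic (n : nat) (As : seq word) (s : seq nat) : Prop :=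
  index_coll n s /\ is_lexmax wle As [seq At As i | i <- s].

Definition is_min (P : nat -> Prop) (x : nat) : Prop :=
  P x /\ forall y, P y -> x <= y.

(* The equations on m, s_0, s_1, ... of the statement (t k = s_k). *)
Definition gen_eqs (n : nat) (As : seq word) (t : nat -> nat) (m : nat) : Prop :=
  t 0 = 0 /\
  (forall k, t k <> n ->
     is_min (fun f => t k < f <= n /\
               forall l, t k < l <= n -> wle (At As l) (At As f)) (t k.+1)) /\
  (forall k, t k = n -> t k.+1 = n) /\
  is_min (fun f => 1 <= f /\ t f = n) m.

(* Main.v *)
From Stdlib Require Import Classical IndefiniteDescription.
Require Import Defs.
From mathcomp Require Import all_boot zify.
Set Implicit Arguments. Unset Strict Implicit. Unset Printing Implicit Defensive.

Definition allPw (P : word -> Prop) (s : seq word) := forall x, x \in s -> P x.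

Definition TPre (P : word -> Prop) (le : word -> word -> Prop) :=
  (forall X, P X -> le X X) /\
  (forall X Y Z, P X -> P Y -> P Z -> le X Y -> le Y Z -> le X Z) /\
  (forall X Y, P X -> P Y -> le X Y \/ le Y X).

Definition gen_eqs_g (le : word -> word -> Prop) (n : nat) (As : seq word) (t : nat -> nat) (m : nat) : Prop :=
  t 0 = 0 /\
  (forall k, t k <> n ->
     is_min (fun f => t k < f <= n /\
               forall l, t k < l <= n -> le (At As l) (At As f)) (t k.+1)) /\
  (forall k, t k = n -> t k.+1 = n) /\
  is_min (fun f => 1 <= f /\ t f = n) m.

Lemma allP_cons P x s : allPw P (x::s) -> P x /\ allPw P s.
Proof.
move=> H; split; first by apply: H; rewrite inE eqxx.
by move=> y hy; apply: H; rewrite inE hy orbT.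
Qed.

Lemma allP_sub P D S : subseq D S -> allPw P S -> allPw P D.
Proof. by move=> s h x /(mem_subseq s) /h. Qed.

Lemma ex_min (Q : nat -> Prop) : (exists x, Q x) -> exists x, is_min Q x.
Proof.
move=> [x Qx]; apply: NNPP => H.
suff: forall y, ~ Q y by move/(_ x).
elim/ltn_ind => y IH Qy; apply: H; exists y; split=> // z Qz.
case: (leqP y z) => // zy; exfalso; exact: IH z zy Qz.
Qed.

Lemma lexle_cong P le1 le2 C D : (forall x y, P x -> P y -> (le1 x y <-> le2 x y)) ->
  allPw P C -> allPw P D -> (lexle le1 C D <-> lexle le2 C D).
Proof.
move=> E; elim: C D => [|x C IH] [|y D] HC HD /=; try tauto.
have [Px PC] := allP_cons HC; have [Py PD] := allP_cons HD.
rewrite (E _ _ Px Py) (E _ _ Py Px) (IH D PC PD); tauto.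
Qed.

Lemma lexmax_cong P le1 le2 S C : (forall x y, P x -> P y -> (le1 x y <-> le2 x y)) ->
  allPw P S -> (is_lexmax le1 S C <-> is_lexmax le2 S C).
Proof.
move=> E PS; split=> -[sub H]; split=> // D sD.
- by apply/(lexle_cong E (allP_sub sD PS) (allP_sub sub PS)); apply: H.
- by apply/(lexle_cong E (allP_sub sD PS) (allP_sub sub PS)); apply: H.
Qed.

Lemma lexmax_single (le : word -> word -> Prop) (X : word) C : is_lexmax le [:: X] C -> C = [:: X].
Proof.
case=> sub mx; have := mx [:: X] (subseq_refl _).
case: C sub mx => [|c C] //= sub _ _.
by move: sub; case: ifP => [/eqP -> /eqP ->|_ /eqP].
Qed.

Lemma lexle_single (le : word -> word -> Prop) (X Y : word) : lexle le [:: X] [:: Y] <-> le X Y.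
Proof. rewrite /=; split; [tauto|]; move=> h; case: (classic (le Y X)); tauto. Qed.

Section Gen.
Variables (P : word -> Prop) (le : word -> word -> Prop).
Hypothesis tp : TPre P le.
Hypothesis P0 : P [::].

Lemma rf X : P X -> le X X. Proof. by move: tp => [h _]; apply: h. Qed.
Lemma tr X Y Z : P X -> P Y -> P Z -> le X Y -> le Y Z -> le X Z.
Proof. by move: tp => [_ [h _]]; apply: h. Qed.
Lemma tot X Y : P X -> P Y -> le X Y \/ le Y X.
Proof. by move: tp => [_ [_ h]]; apply: h. Qed.

Lemma lexle_refl C : allPw P C -> lexle le C C.
Proof.
elim: C => [|x C IH] //= H.
have [Px PC] := allP_cons H.
right; split; first exact: rf. split; first exact: rf. exact: IH.
Qed.

Lemma lexle_trans C D E : allPw P C -> allPw P D -> allPw P E ->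
  lexle le C D -> lexle le D E -> lexle le C E.
Proof.
elim: C D E => [|x C IH] D E //.
case: D => [|y D] //; case: E => [|z E] HC HD HE /=; first by move=> _ [].
have [Px PC] := allP_cons HC; have [Py PD] := allP_cons HD; have [Pz PE] := allP_cons HE.
move=> [[xy nyx]|[xy [yx CD]]] [[yz nzy]|[yz [zy DE]]].
- left; split; first exact: tr Px Py Pz xy yz.
  move=> zx; apply: nyx; exact: tr Py Pz Px yz zx.
- left; split; first exact: tr Px Py Pz xy yz.
  move=> zx; apply: nyx; exact: tr Py Pz Px yz zx.
- left; split; first exact: tr Px Py Pz xy yz.
  move=> zx; apply: nzy; exact: tr Pz Px Py zx xy.
- right; split; first exact: tr Px Py Pz xy yz. split; first exact: tr Pz Py Px zy yx.
  exact: IH CD DE.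
Qed.

Lemma lexle_total C D : allPw P C -> allPw P D -> lexle le C D \/ lexle le D C.
Proof.
elim: C D => [|x C IH] [|y D] HC HD /=; try tauto.
have [Px PC] := allP_cons HC; have [Py PD] := allP_cons HD.
case: (classic (le x y)) => xy; case: (classic (le y x)) => yx.
- case: (IH D PC PD) => h; [left|right]; right; tauto.
- left; left; tauto.
- right; left; tauto.
- case: (tot Px Py); tauto.
Qed.

Lemma nodec v b c : allPw P v -> P b -> P c -> (forall y, y \in v -> le y b) -> le b c ->
  ~ lexle le (c :: v) v.
Proof.
elim: v c => [|d v IH] c Hv Pb Pc Hle bc; first by move=> /=.
have [Pd Pv] := allP_cons Hv.
have db : le d b by apply: Hle; rewrite inE eqxx.
move=> /= [[cd ndc]|[cd [dc H]]].
- apply: ndc; exact: tr Pd Pb Pc db bc.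
- have Hle' : forall y, y \in v -> le y b by move=> y hy; apply: Hle; rewrite inE hy orbT.
  exact: (IH d Pv Pb Pd Hle' (tr Pb Pc Pd bc cd) H).
Qed.

End Gen.


Lemma At_cons (x : word) S b : 1 < b -> At (x :: S) b = At S b.-1.
Proof. by case: b => [|[|b]]. Qed.

Lemma path_pred u j : path ltn j.+1 u -> path ltn j (map predn u).
Proof.
elim: u j => [|b u IH] j //= /andP[jb pu].
apply/andP; split; first lia.
apply: IH; by have -> : b.-1.+1 = b by lia.
Qed.

Lemma path_succ u j : path ltn j u -> path ltn j.+1 (map succn u).
Proof.
elim: u j => [|b u IH] j //= /andP[jb pu].
apply/andP; split; first lia. exact: IH.
Qed.

Lemma path_weaken u i j : i <= j -> path ltn j u -> path ltn i u.
Proof. case: u => [|b u] //= ij /andP[jb ->]; rewrite andbT; lia. Qed.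

Lemma all_pred u N : all (fun i => i <= N.+1) u -> all (fun i => i <= N) (map predn u).
Proof. elim: u => [|b u IH] //= /andP[h1 h2]; rewrite IH // andbT; lia. Qed.

Lemma all_succ u N : all (fun i => i <= N) u -> all (fun i => i <= N.+1) (map succn u).
Proof. elim: u => [|b u IH] //= /andP[h1 h2]; rewrite IH // andbT; lia. Qed.

Lemma path_mem u j i : path ltn j u -> i \in u -> j < i.
Proof.
rewrite (path_sortedE ltn_trans) => /andP[/allP h _] /h //.
Qed.

Lemma B1 (S : seq word) u : path ltn 0 u -> all (fun i => i <= size S) u ->
  subseq [seq At S i | i <- u] S.
Proof.
elim: S u => [|x S IH] u.
- case: u => [|a u] //= /andP[h1 _] /andP[h2 _]; lia.
- have key : forall w, path ltn 1 w -> all (fun i => i <= size (x :: S)) w ->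
     subseq [seq At (x :: S) i | i <- w] S.
    move=> w pw aw.
    have -> : [seq At (x :: S) i | i <- w] = [seq At S i | i <- map predn w].
      rewrite -map_comp; apply/eq_in_map => i hi /=.
      by apply: At_cons; apply: (path_mem pw).
    apply: IH; first exact: path_pred. exact: all_pred.
  case: u => [|a u]; first by move=> *; rewrite ?sub0seq.
  rewrite [path _ _ _]/= [all _ _]/= => /andP[a0 pu] /andP[aS au].
  case: (ltnP 1 a) => a1.
  + apply: (subseq_trans _ (subseq_cons S x)).
    apply: key; last by rewrite /= aS.
    by rewrite /= a1.
  + have ea : a = 1 by lia. subst a.
    rewrite /= eqxx. apply: key => //.
Qed.

Lemma B2 (S : seq word) D : subseq D S ->
  exists u, path ltn 0 u /\ all (fun i => i <= size S) u /\ D = [seq At S i | i <- u].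
Proof.
elim: S D => [|x S IH] D.
- rewrite subseq0 => /eqP ->; by exists [::].
- have key : forall u, path ltn 0 u ->
     [seq At (x :: S) i | i <- map succn u] = [seq At S i | i <- u].
    move=> u pu; rewrite -map_comp; apply/eq_in_map => i hi /=.
    rewrite At_cons /=; last by have := path_mem pu hi; lia.
    done.
  case: D => [|y D]; first by move=> _; exists [::].
  rewrite /=; case: ifP => [/eqP ->|_] h.
  + have [u [pu [au ->]]] := IH _ h.
    exists (1 :: map succn u); split; first by rewrite /= path_succ.
    split; first by rewrite /= all_succ.
    by rewrite map_cons key.
  + have [u [pu [au ->]]] := IH _ h.
    exists (map succn u); split; first exact: (path_weaken (isT : 0 <= 1) (path_succ pu)).
    split; first by rewrite all_succ.
    by rewrite key.
Qed.


Section Idx.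
Variables (P : word -> Prop) (le : word -> word -> Prop).
Hypothesis tp : TPre P le.
Hypothesis P0 : P [::].
Variable S : seq word.
Hypothesis PS : allPw P S.

Local Notation n := (size S).
Local Notation A := (At S).

Lemma PA i : P (A i).
Proof.
rewrite /At; case: (ltnP i.-1 (size S)) => h.
- apply: PS; exact: mem_nth.
- by rewrite nth_default.
Qed.
Arguments PA : clear implicits.

Lemma rfA i : le (A i) (A i).
Proof. exact (rf tp (PA i)). Qed.
Lemma trA i j k : le (A i) (A j) -> le (A j) (A k) -> le (A i) (A k).
Proof. exact (tr tp (PA i) (PA j) (PA k)). Qed.

Lemma ex_max j e : j < e -> exists f, j < f <= e /\ forall l, j < l <= e -> le (A l) (A f).
Proof.
elim: e => [//|e IH] je.
case: (ltnP j e) => [je'|ej].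
- have [f [hf Hf]] := IH je'.
  case: (tot tp (PA e.+1) (PA f)) => h.
  + exists f; split; first lia.
    move=> l hl; case: (ltnP e l) => el.
    * have -> : l = e.+1 by lia. exact h.
    * apply: Hf; lia.
  + exists e.+1; split; first lia.
    move=> l hl; case: (ltnP e l) => el.
    * have -> : l = e.+1 by lia. exact: rfA.
    * have hl' : j < l <= e by lia.
      exact: trA (Hf l hl') h.
- exists e.+1; split; first lia.
  move=> l hl; have -> : l = e.+1 by lia. exact: rfA.
Qed.

Lemma gen_exists : 0 < n -> exists t m, gen_eqs_g le n S t m.
Proof.
move=> n0.
pose Spec := fun j f => (j < n -> is_min (fun f => j < f <= n /\ forall l, j < l <= n -> le (A l) (A f)) f) /\ (n <= j -> f = n).
have Hg : forall j, exists f, Spec j f.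
  move=> j; case: (ltnP j n) => jn.
  - have [f Hf] := ex_min (ex_max jn). exists f; split=> // nj; lia.
  - exists n; split=> // h; lia.
pose g j := proj1_sig (constructive_indefinite_description _ (Hg j)).
have gP : forall j, Spec j (g j) := fun j => proj2_sig (constructive_indefinite_description _ (Hg j)).
pose t k := iter k g 0.
have tS : forall k, t k.+1 = g (t k) by [].
have tle : forall k, t k <= n.
  elim=> [|k IH]; first by [].
  rewrite tS; have [h1 h2] := gP (t k).
  case: (ltnP (t k) n) => h.
  + by have [[/andP[_ ->] _] _] := h1 h.
  + by rewrite h2.
have tgrow : forall k, k <= t k \/ t k = n.
  elim=> [|k IH]; first by left.
  rewrite tS; have [h1 h2] := gP (t k).
  case: (ltnP (t k) n) => h.
  + have [[/andP[h3 _] _] _] := h1 h. left; case: IH => IH; lia.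
  + right; exact: h2.
have tn : t n = n by case: (tgrow n) => // h; have := tle n; lia.
have [m Hm] := ex_min (ex_intro (fun f => 1 <= f /\ t f = n) n (conj n0 tn)).
exists t, m; split; first by []. split.
  move=> k hk; rewrite tS; have [h1 _] := gP (t k); apply: h1.
  have := tle k; lia.
split=> //.
move=> k hk; rewrite tS; have [_ h2] := gP (t k); apply: h2; lia.
Qed.

Section GE.
Variables (t : nat -> nat) (m : nat).
Hypothesis H : gen_eqs_g le n S t m.
Hypothesis n0 : 0 < n.

Lemma F1 k : t k <= n.
Proof.
have [_ [h1 [h2 _]]] := H.
elim: k => [|k IH]; first by have [-> _] := H.
case: (eqVneq (t k) n) => e; first by rewrite h2.
by have [[/andP[_ ->] _] _] := h1 k (elimN eqP e).
Qed.

Lemma F2 k : k < m -> t k < n.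
Proof.
have [h0 [_ [_ [_ hm]]]] := H.
move=> km; case: (eqVneq (t k) n) => e; last by have := F1 k; lia.
case: k km e => [|k] km e; first by rewrite h0 in e; lia.
have := hm k.+1 (conj (isT : 0 < k.+1) e); lia.
Qed.

Lemma Fnext k : k < m -> is_min (fun f => t k < f <= n /\
               forall l, t k < l <= n -> le (A l) (A f)) (t k.+1).
Proof.
have [_ [h1 _]] := H.
move=> km; apply: h1; have := F2 km; lia.
Qed.

Lemma Fm : t m = n.
Proof. by have [_ [_ [_ [[_ ->] _]]]] := H. Qed.

Definition r k := [seq t i | i <- iota k.+1 (m - k)].

Lemma r_step k : k < m -> r k = t k.+1 :: r k.+1.
Proof. move=> km; rewrite /r; have -> : m - k = (m - k.+1).+1 by lia. by []. Qed.

Lemma r_m : r m = [::].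
Proof. by rewrite /r subnn. Qed.

Definition ic_above j u := path ltn j u /\ all (fun i => i <= n) u.

Lemma above_n u : ic_above n u -> u = [::].
Proof. case: u => [|a u] //= [/andP[h1 _] /andP[h2 _]]; lia. Qed.

Lemma K1 d k : k + d = m -> ic_above (t k) (r k).
Proof.
elim: d k => [|d IH] k hk.
- have -> : k = m by lia. by rewrite r_m.
- rewrite r_step; last by lia.
  have [hp ha] := IH k.+1 (ltac:(lia)).
  have [[/andP[h1 h2] _] _] := Fnext (ltac:(lia) : k < m).
  by split; rewrite /= ?hp ?ha ?h1 ?h2.
Qed.

Lemma K2 d k : k + d = m -> forall u, ic_above (t k) u ->
   lexle le [seq A i | i <- u] [seq A i | i <- r k].
Proof.
elim: d k => [|d IH] k hk u.
- have -> : k = m by lia. rewrite Fm => /above_n -> //.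
- have km : k < m by lia.
  rewrite r_step //.
  case: u => [|a u]; first by [].
  move=> [/= /andP[ka pu] /andP[an au]].
  have [[/andP[kf fn] Hf] minf] := Fnext km.
  have la : le (A a) (A (t k.+1)) by apply: Hf; rewrite ka an.
  case: (classic (le (A (t k.+1)) (A a))) => fa; last by left.
  have fa' : t k.+1 <= a.
    apply: minf; split; first by rewrite ka an.
    move=> l hl; exact: trA (Hf l hl) fa.
  right; split=> //; split=> //.
  apply: IH; first lia.
  split; [exact: path_weaken fa' pu | exact au].
Qed.

Lemma K3 d k : k + d = m -> forall u, ic_above (t k) u ->
   (forall w, ic_above (t k) w -> lexle le [seq A i | i <- w] [seq A i | i <- u]) ->
   u = r k.
Proof.
elim: d k => [|d IH] k hk u.
- have -> : k = m by lia. rewrite Fm r_m => /above_n -> //.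
- have km : k < m by lia.
  rewrite r_step //.
  have [[/andP[kf fn] Hf] minf] := Fnext km.
  set f := t k.+1 in kf fn Hf minf *.
  move=> hu Hmax.
  have := Hmax [:: f]; rewrite /ic_above /= kf fn => /(_ (conj isT isT)).
  case: u hu Hmax => [|a u] //.
  move=> [/= /andP[ka pu] /andP[an au]] Hmax _.
  have Hla : forall l, t k < l <= n -> le (A l) (A a).
    move=> l /andP[h1 h2].
    have := Hmax [:: l]; rewrite /ic_above /= h1 h2 => /(_ (conj isT isT)) /=; tauto.
  have fa : f <= a by apply: minf; split; [rewrite ka an | exact: Hla].
  have af : a = f.
    case: (ltnP f a) => fa'; last by lia.
    exfalso.
    have hw : ic_above (t k) [:: f, a & u] by rewrite /ic_above /= kf fa' pu fn an au.
    have Hv : allPw P [seq A i | i <- a :: u] by move=> y /mapP [i _ ->]; exact: PA.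
    have Hle' : forall y, y \in [seq A i | i <- a :: u] -> le y (A a).
      move=> y /mapP [i hi ->]; apply: Hla.
      move: hi; rewrite inE => /orP[/eqP ->|hi]; first by rewrite ka an.
      have := path_mem pu hi; have := allP au i hi; lia.
    have hbc : le (A a) (A f) by apply: Hf; rewrite ka an.
    exact: (nodec tp Hv (PA a) (PA f) Hle' hbc (Hmax _ hw)).
  subst a; congr (_ :: _).
  apply: IH; first lia.
  - by split.
  - move=> w [pw aw].
    have := Hmax (f :: w); rewrite /ic_above /= kf pw fn aw => /(_ (conj isT isT)).
    move=> /= [[_ h]|[_ [_ h]]] //; exfalso; apply: h; exact: rfA.
Qed.

Lemma ic0 u : index_coll n u <-> ic_above 0 u.
Proof.
rewrite /index_coll /ic_above (path_sortedE ltn_trans).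
split => [[s [a b]]|[/andP[a s] b]]; split => //.
by rewrite a s.
Qed.

Lemma r_max : index_coll n [seq t i | i <- iota 1 m] /\
   is_lexmax le S [seq A i | i <- [seq t i | i <- iota 1 m]].
Proof.
have e : [seq t i | i <- iota 1 m] = r 0 by rewrite /r subn0.
rewrite e.
have h0 : t 0 = 0 by case: H.
have hr := K1 (add0n m); rewrite h0 in hr.
split; first by apply/ic0.
split; first by case: hr => a b; apply: B1.
move=> D /B2 [u [pu [au ->]]].
apply: (K2 (add0n m)); rewrite h0; by split.
Qed.

Lemma r_uniq s : index_coll n s /\ is_lexmax le S [seq A i | i <- s] ->
   s = [seq t i | i <- iota 1 m].
Proof.
have e : [seq t i | i <- iota 1 m] = r 0 by rewrite /r subn0.
have h0 : t 0 = 0 by case: H.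
rewrite e => -[/ic0 hs [_ mx]].
apply: (K3 (add0n m)); rewrite h0 //.
move=> w [pw aw]; apply: mx; exact: B1.
Qed.

End GE.

Theorem gen_main : 0 < n ->
  (exists! s, index_coll n s /\ is_lexmax le S [seq A i | i <- s]) /\
  (exists t m, gen_eqs_g le n S t m) /\
  (forall s t m, index_coll n s /\ is_lexmax le S [seq A i | i <- s] ->
     gen_eqs_g le n S t m -> s = [seq t i | i <- iota 1 m]).
Proof.
move=> n0; have [t [m H]] := gen_exists n0.
split; last split.
- exists [seq t i | i <- iota 1 m]; split; first exact: r_max H n0.
  move=> s hs; symmetry; exact (r_uniq H n0 hs).
- by exists t, m.
- move=> s t' m' hs H'; exact (r_uniq H' n0 hs).
Qed.

Lemma lexmax_exists : exists C, is_lexmax le S C.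
Proof.
case: (posnP n) => hn.
- exists [::]; split; first exact: sub0seq.
  move=> D; have -> : S = [::] by apply/eqP; rewrite -size_eq0 hn.
  by rewrite subseq0 => /eqP ->.
- have [t [m H]] := gen_exists hn.
  exists [seq A i | i <- [seq t i | i <- iota 1 m]]; exact: (r_max H hn).2.
Qed.

End Idx.


Lemma foldr_minn_le x (w : word) y : y \in w -> foldr minn x w <= y.
Proof.
elim: w => [|z w IH] //=; rewrite inE => /orP[/eqP->|h]; first exact: geq_minl.
exact: leq_trans (geq_minr _ _) (IH h).
Qed.

Lemma foldr_minn_mem x (w : word) : foldr minn x w \in x :: w.
Proof.
elim: w => [|z w IH] /=; first by rewrite inE.
rewrite /minn; case: ifP => _; first by rewrite !inE eqxx orbT.
move: IH; rewrite !inE => /orP[->|->] //; by rewrite !orbT.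
Qed.

Lemma minw_le (w : word) y : y \in w -> minw w <= y.
Proof. exact: foldr_minn_le. Qed.

Lemma minw_mem (w : word) : w != [::] -> minw w \in w.
Proof.
case: w => [|z w] // _; rewrite /minw /=.
have := foldr_minn_mem z (z :: w); rewrite /= inE => /orP[/eqP->|] //.
by rewrite inE eqxx.
Qed.

Lemma maxw_ge (w : word) y : y \in w -> y <= maxw w.
Proof.
elim: w => [|z w IH] //=; rewrite inE => /orP[/eqP->|h]; first exact: leq_maxl.
exact: leq_trans (IH h) (leq_maxr _ _).
Qed.

Lemma maxw_le (w : word) M : (forall y, y \in w -> y <= M) -> maxw w <= M.
Proof.
elim: w => [|z w IH] //= h; rewrite geq_max h ?inE ?eqxx // IH // => y hy.
by apply: h; rewrite inE hy orbT.
Qed.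

Lemma split_mem n (A : word) : forall Y, Y \in split_on n A -> forall y, y \in Y -> (y \in A) && (y != n).
Proof.
elim: A => [|x s IH] Y /=.
- by rewrite inE => /eqP -> y.
- case: eqP => [xn|xn].
  + rewrite inE => /orP [/eqP -> //|hY] y hy.
    by have /andP[h1 h2] := IH Y hY y hy; rewrite inE h1 h2 orbT.
  + case E: (split_on n s) IH => [|t r'] IH.
    * rewrite inE => /eqP -> y; rewrite inE => /eqP ->; rewrite inE eqxx /=; apply/eqP; exact: xn.
    * rewrite inE => /orP[/eqP ->|hY] y.
      - rewrite inE => /orP[/eqP ->|hy]; first by rewrite inE eqxx /=; apply/eqP; exact: xn.
        have /andP[h1 h2] := IH t (mem_head _ _) y hy; by rewrite inE h1 h2 orbT.
      - move=> hy; have /andP[h1 h2] := IH Y (@mem_behead _ (t :: r') _ hY) y hy; by rewrite inE h1 h2 orbT.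
Qed.

Lemma split_notin n (A : word) : n \notin A -> split_on n A = [:: A].
Proof.
elim: A => [|x s IH] //=; rewrite inE negb_or => /andP[nx ns].
by rewrite eq_sym (negbTE nx) IH.
Qed.

Definition bd a b (X : word) : Prop := all (fun y => a <= y <= b) X.

Lemma wle_nil k : wle_f k [::] [::].
Proof. by case: k. Qed.

Definition Props a b :=
  (forall k1 k2, b.+1 - a <= k1 -> b.+1 - a <= k2 -> forall X Y, bd a b X -> bd a b Y ->
     (wle_f k1 X Y <-> wle_f k2 X Y)) /\
  (forall k, b.+1 - a <= k -> TPre (bd a b) (wle_f k)).

Lemma bd_nil a b X : b < a -> bd a b X -> X = [::].
Proof. case: X => [|y X] //= ba /andP[/andP[h1 h2] _]; lia. Qed.

Lemma split_bd a b X : bd a b X -> allPw (bd a.+1 b) (split_on a X).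
Proof.
move=> hX Y hY; apply/allP => y hy.
have /andP[yX ya] := split_mem hY hy.
have /andP[h1 h2] := allP hX y yX.
move/eqP: ya => ya; apply/andP; split=> //; lia.
Qed.

Lemma Props_all d : forall a b, b.+1 - a <= d -> Props a b.
Proof.
elim: d => [|d IHd] a b hd.
- have ba : b < a by lia.
  split.
  + move=> k1 k2 _ _ X Y hX hY; rewrite (bd_nil ba hX) (bd_nil ba hY); split=> _; exact: wle_nil.
  + move=> k _; split; last split.
    * move=> X hX; rewrite (bd_nil ba hX); exact: wle_nil.
    * move=> X Y Z hX hY hZ _ _; rewrite (bd_nil ba hX) (bd_nil ba hZ); exact: wle_nil.
    * move=> X Y hX hY; left; rewrite (bd_nil ba hX) (bd_nil ba hY); exact: wle_nil.
- case: (ltnP b a) => ba.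
  + apply: IHd; lia.
  have [FI TP] := IHd a.+1 b (ltac:(lia)).
  have L : forall k', b - a <= k' -> forall X Y, bd a b X -> bd a b Y ->
      forall C D, is_lexmax (wle_f k') (split_on a X) C -> is_lexmax (wle_f k') (split_on a Y) D ->
      (wle_f k'.+1 X Y <-> lexle (wle_f k') C D).
    move=> k' hk X Y hX hY C D hC hD.
    have tp := TP k' (ltac:(lia)).
    have PCX := allP_sub hC.1 (split_bd hX).
    have PDY := allP_sub hD.1 (split_bd hY).
    have hXY : bd a b (X ++ Y) by rewrite /bd all_cat hX hY.
    case: (boolP (a \in X ++ Y)) => ha.
    * have hm : minw (X ++ Y) = a.
        have h1 := minw_le ha.
        have hne : X ++ Y != [::] by case: (X ++ Y) ha.
        have /andP[h2 _] := allP hXY _ (minw_mem hne).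
        lia.
      rewrite /=.
      move: hm ha; case: (X ++ Y) => [|z w] //= hm _.
      rewrite hm; split.
      - move=> [C' [D' [hC' [hD' h]]]].
        have PC' := allP_sub hC'.1 (split_bd hX).
        have PD' := allP_sub hD'.1 (split_bd hY).
        apply: (lexle_trans tp PCX PC' PDY (hC'.2 C hC.1)).
        exact: (lexle_trans tp PC' PD' PDY h (hD.2 D' hD'.1)).
      - move=> h; exists C, D; tauto.
    * rewrite mem_cat negb_or in ha; case/andP: ha => haX haY.
      rewrite (split_notin haX) in hC; rewrite (split_notin haY) in hD.
      rewrite (lexmax_single hC) (lexmax_single hD) lexle_single.
      have hX' : bd a.+1 b X.
        apply/allP => y hy; have /andP[h1 h2] := allP hX y hy.
        have : y != a by apply: contraNneq haX => <-.
        move/eqP => ?; apply/andP; split=> //; lia.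
      have hY' : bd a.+1 b Y.
        apply/allP => y hy; have /andP[h1 h2] := allP hY y hy.
        have : y != a by apply: contraNneq haY => <-.
        move/eqP => ?; apply/andP; split=> //; lia.
      apply: FI => //; lia.
  have Ex : forall k', b - a <= k' -> forall X, bd a b X -> exists C, is_lexmax (wle_f k') (split_on a X) C.
    move=> k' hk X hX; apply: (lexmax_exists (TP k' (ltac:(lia)))) => //.
    exact: split_bd.
  split.
  + move=> [|k1] [|k2] h1 h2 X Y hX hY; try lia.
    have [C hC] := Ex k1 (ltac:(lia)) X hX.
    have [D hD] := Ex k1 (ltac:(lia)) Y hY.
    have E : forall x y, bd a.+1 b x -> bd a.+1 b y -> (wle_f k1 x y <-> wle_f k2 x y).
      move=> x y hx hy; apply: FI => //; lia.
    have hC2 := iffLR (lexmax_cong C E (split_bd hX)) hC.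
    have hD2 := iffLR (lexmax_cong D E (split_bd hY)) hD.
    rewrite (L k1 (ltac:(lia)) X Y hX hY C D hC hD) (L k2 (ltac:(lia)) X Y hX hY C D hC2 hD2).
    apply: lexle_cong E _ _.
    * exact: allP_sub hC.1 (split_bd hX).
    * exact: allP_sub hD.1 (split_bd hY).
  + move=> [|k'] hk; first lia.
    have tp := TP k' (ltac:(lia)).
    split; last split.
    * move=> X hX; have [C hC] := Ex k' (ltac:(lia)) X hX.
      rewrite (L k' (ltac:(lia)) X X hX hX C C hC hC).
      exact (lexle_refl tp (allP_sub hC.1 (split_bd hX))).
    * move=> X Y Z hX hY hZ.
      have [C hC] := Ex k' (ltac:(lia)) X hX.
      have [D hD] := Ex k' (ltac:(lia)) Y hY.
      have [E hE] := Ex k' (ltac:(lia)) Z hZ.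
      rewrite (L k' (ltac:(lia)) X Y hX hY C D hC hD) (L k' (ltac:(lia)) Y Z hY hZ D E hD hE)
              (L k' (ltac:(lia)) X Z hX hZ C E hC hE).
      exact (lexle_trans tp (allP_sub hC.1 (split_bd hX)) (allP_sub hD.1 (split_bd hY))
                            (allP_sub hE.1 (split_bd hZ))).
    * move=> X Y hX hY.
      have [C hC] := Ex k' (ltac:(lia)) X hX.
      have [D hD] := Ex k' (ltac:(lia)) Y hY.
      rewrite (L k' (ltac:(lia)) X Y hX hY C D hC hD) (L k' (ltac:(lia)) Y X hY hX D C hD hC).
      exact (lexle_total tp (allP_sub hC.1 (split_bd hX)) (allP_sub hD.1 (split_bd hY))).
Qed.


Lemma TPre_cong P le1 le2 : (forall x y, P x -> P y -> (le1 x y <-> le2 x y)) ->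
  TPre P le1 -> TPre P le2.
Proof.
move=> E [r [t o]]; split; last split.
- move=> X hX; apply/E => //; exact: r.
- move=> X Y Z hX hY hZ h1 h2; apply/E => //; apply: (t X Y Z) => //; apply/E => //.
- move=> X Y hX hY; case: (o X Y hX hY) => h; [left|right]; apply/E => //.
Qed.

Theorem lemma1 (n : nat) (As : seq word) :
  1 <= n -> size As = n ->
  (exists! s, max_ic n As s) /\
  (exists t m, gen_eqs n As t m) /\
  (forall s t m, max_ic n As s -> gen_eqs n As t m ->
                 s = [seq t i | i <- iota 1 m]).
Proof.
move=> n1 hs; subst n.
set M := maxw (flatten As).
have PAs : allPw (bd 0 M) As.
  move=> X hX; apply/allP => y hy; rewrite /= maxw_ge //.
  by apply/flattenP; exists X.
have [_ TPM] := Props_all (leqnn (M.+1 - 0)).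
have agree : forall X Y, bd 0 M X -> bd 0 M Y -> (wle_f M.+1 X Y <-> wle X Y).
  move=> X Y hX hY; rewrite /wle.
  set lo := minw (X ++ Y); set hi := maxw (X ++ Y).
  have hXY : forall y, y \in X ++ Y -> y <= M.
    move=> y; rewrite mem_cat => /orP[h|h].
    + by have /andP[_ ->] := allP hX y h.
    + by have /andP[_ ->] := allP hY y h.
  have him : hi <= M by apply: maxw_le.
  have [FI _] := Props_all (leqnn (hi.+1 - lo)).
  have bX : bd lo hi X.
    apply/allP => y hy; rewrite minw_le ?maxw_ge //= mem_cat hy //.
  have bY : bd lo hi Y.
    apply/allP => y hy; rewrite minw_le ?maxw_ge //= mem_cat hy ?orbT //.
  apply: FI => //; lia.
have tp : TPre (bd 0 M) wle := TPre_cong agree (TPM M.+1 (ltac:(lia))).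
exact: (gen_main tp (isT : bd 0 M [::]) PAs n1).
Qed.
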